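(* Let $L\ge3$ be odd and let $\mathcal{C}$ be an equi-difference code in $\mathsf{CAC}(L,3)$ with leave $\Lambda$. If $|\Lambda|<4$ and $\{L/3,2L/3\}\not\subseteq\Lambda$, then $\mathcal{C}$ is optimal; moreover $|\mathcal{C}|=M^e(L,3)=M(L,3)$.
   Context: $\mathcal{P}(L,\omega)$ is the set of $\omega$-element subsets of $\mathbb{Z}_L$. For $\mathcal{I}\in\mathcal{P}(L,\omega)$: $d(\mathcal{I})=\{a-b \bmod L: a,b\in\mathcal{I}\}$, $d^*(\mathcal{I})=d(\mathcal{I})\setminus\{0\}$. A conflict-avoiding code (CAC) of length $L$ and weight $\omega$ is a set $\mathcal{C}\subseteq\mathcal{P}(L,\omega)$ with $d^*(\mathcal{I})\cap d^*(\mathcal{J})=\emptyset$ for all distinct $\mathcal{I},\mathcal{J}\in\mathcal{C}$; $\mathsf{CAC}(L,\omega)$ is the class of these codes, $M(L,\omega)$ their maximum size, and a code of size $M(L,\omega)$ is optimal. A codeword is equi-difference if it equals $\{0,g,2g,\dots,(\omega-1)g\}$ (mod $L$) for some $g$; a code is equi-difference if all its codewords are; $M^e(L,\omega)$ is the maximum size of an equi-difference code in $\mathsf{CAC}(L,\omega)$. The leave of $\mathcal{C}$ is $\Lambda=\mathbb{Z}_L\setminus\bigcup_{\mathcal{I}\in\mathcal{C}}d(\mathcal{I})$. (When $3\nmid L$ the condition $\{L/3,2L/3\}\not\subseteq\Lambda$ is vacuous.) *)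

(* Defs.v *)
(* Z_L is represented by 'I_L (residues 0..L-1). *)
From mathcomp Require Import all_boot.
Set Implicit Arguments. Unset Strict Implicit. Unset Printing Implicit Defensive.

Definition zdiff (L : nat) (a b : 'I_L) : nat := (a + (L - b)) %% L.

Definition dset (L : nat) (I : {set 'I_L}) : {set 'I_L} :=
  [set x : 'I_L | [exists a in I, exists b in I, nat_of_ord x == zdiff a b]].

Definition dstar (L : nat) (I : {set 'I_L}) : {set 'I_L} :=
  dset I :\: [set x : 'I_L | nat_of_ord x == 0].

Definition is_CAC (L w : nat) (C : {set {set 'I_L}}) : bool :=
  [forall I in C, #|I| == w] &&
  [forall I in C, forall J in C, (I != J) ==> [disjoint dstar I & dstar J]].

Definition equidiff_word (L w : nat) (I : {set 'I_L}) : bool :=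
  [exists g : 'I_L,
     I == [set x : 'I_L | [exists i : 'I_w, nat_of_ord x == (i * g) %% L]]].

Definition equidiff_code (L w : nat) (C : {set {set 'I_L}}) : bool :=
  [forall I in C, equidiff_word w I].

Definition M (L w : nat) : nat :=
  \max_(C : {set {set 'I_L}} | is_CAC w C) #|C|.
Definition Me (L w : nat) : nat :=
  \max_(C : {set {set 'I_L}} | is_CAC w C && equidiff_code w C) #|C|.

Definition optimal (L w : nat) (C : {set {set 'I_L}}) : Prop :=
  is_CAC w C /\ #|C| = M L w.

Definition leave (L : nat) (C : {set {set 'I_L}}) : {set 'I_L} :=
  ~: \bigcup_(I in C) dset I.

(* Main.v *)
Require Import Defs.
From mathcomp Require Import all_boot all_algebra.
From mathcomp Require Import zify ring.
Set Implicit Arguments. Unset Strict Implicit. Unset Printing Implicit Defensive.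
Import GRing.Theory.

Lemma zdiffE p (a b : 'I_p.+2) : zdiff a b = val (a - b)%R.
Proof. by rewrite /zdiff /= modnDmr. Qed.

Lemma dsetP p (I : {set 'I_p.+2}) x :
  reflect (exists a b, [/\ a \in I, b \in I & x = (a - b)%R]) (x \in dset I).
Proof.
rewrite inE; apply: (iffP existsP) => [[a /andP[aI /existsP[b /andP[bI /eqP E]]]]|[a [b [aI bI E]]]].
  by exists a, b; split => //; apply: val_inj; rewrite /= E zdiffE.
by exists a; rewrite aI /=; apply/existsP; exists b; rewrite bI E zdiffE; apply/eqP.
Qed.

Lemma dstarE p (I : {set 'I_p.+2}) x :
  (x \in dstar I) = (x != 0%R) && (x \in dset I).
Proof. by rewrite !inE. Qed.

Lemma mul3 p (x : 'I_p.+2) : (x *+ 3 = x + x + x)%R.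
Proof. ring. Qed.

Lemma valN p (x : 'I_p.+2) : val (- x)%R = (p.+2 - x) %% p.+2.
Proof. by []. Qed.

Lemma val3 p (x : 'I_p.+2) : val (x *+ 3)%R = (x * 3) %% p.+2.
Proof. by rewrite Zp_mulrn. Qed.

Lemma val2 p (x : 'I_p.+2) : val (x *+ 2)%R = (x * 2) %% p.+2.
Proof. by rewrite Zp_mulrn. Qed.

Lemma two_cancel p (y : 'I_p.+2) : odd p.+2 -> (y *+ 2 = 0)%R -> y = 0%R.
Proof.
move=> oL /(congr1 val); rewrite val2 /= => /eqP; rewrite -/(dvdn _ _).
rewrite Gauss_dvdl ?coprimen2 // => H; apply: val_inj => /=.
apply/eqP; move: (ltn_ord y) H; case: (nat_of_ord y) => // n lt /dvdn_leq.
by move=> /(_ isT); rewrite leqNgt lt.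
Qed.

Lemma natT (L n : nat) : n < L ->
  (n != 0) && (n * 3 %% L == 0) = (3 %| L) && ((n == L %/ 3) || (n == 2 * (L %/ 3))).
Proof.
move=> nL; apply/idP/idP.
  case/andP=> n0; rewrite -/(dvdn _ _) => /dvdnP [q Hq].
  have q3 : q < 3.
    by rewrite -(ltn_pmul2r (leq_ltn_trans (leq0n n) nL)) -Hq mulnC ltn_pmul2l.
  move: q3 Hq n0; case: q => [|[|[|q]]] //= Hq n0; lia.
case/andP => /dvdnP [k E]; rewrite E mulnK // in nL *.
case/orP => /eqP E2; rewrite E2 in nL *; apply/andP; split; try lia.
  by rewrite modnn.
by rewrite -mulnA modnMl.
Qed.

Definition Tp p (x : 'I_p.+2) := ((x != 0) && (x *+ 3 == 0))%R.

Lemma T_char p (x : 'I_p.+2) : Tp x =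
  (3 %| p.+2) && ((val x == p.+2 %/ 3) || (val x == 2 * (p.+2 %/ 3))).
Proof. by rewrite /Tp -val_eqE -[(x *+ 3 == 0)%R]val_eqE val3 /=; apply: natT. Qed.

Lemma T_pair p (u t : 'I_p.+2) : Tp u -> Tp t -> t = u \/ t = (- u)%R.
Proof.
rewrite !T_char => /andP[/dvdnP[k E] Hu] /andP[_ Ht].
have k0 : 0 < k by move: E; case: k => //; rewrite mul0n.
suff [h|h] : val t = val u \/ val t = val (- u)%R.
- by left; apply: val_inj.
- by right; apply: val_inj.
move: Hu Ht; rewrite valN /=; move: (nat_of_ord u) (nat_of_ord t) => a b.
rewrite E mulnK //.
case/orP => /eqP->; case/orP => /eqP->; [left|right|right|left] => //.
  by rewrite modn_small; lia.
by rewrite modn_small; lia.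
Qed.

Local Open Scope ring_scope.

Lemma mem_dstar p (I : {set 'I_p.+2}) a b :
  a \in I -> b \in I -> a != b -> a - b \in dstar I.
Proof.
by move=> aI bI ab; rewrite dstarE subr_eq0 ab /=; apply/dsetP; exists a, b.
Qed.

Lemma dstarP p (I : {set 'I_p.+2}) x : x \in dstar I ->
  x != 0 /\ exists a b, [/\ a \in I, b \in I & x = a - b].
Proof. by rewrite dstarE => /andP[x0 /dsetP]. Qed.

Lemma card_seq (T : finType) (A : {set T}) (s : seq T) :
  uniq s -> all (fun x => x \in A) s -> (size s <= #|A|)%N.
Proof.
move=> us /allP sA; move/card_uniqP: us => <-.
by apply: subset_leq_card; apply/subsetP => x /sA.
Qed.

Lemma neq_of p (x y z : 'I_p.+2) : z != 0 -> (x - y = z \/ x - y = - z) -> (x == y) = false.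
Proof.
move=> z0 H; apply/negbTE/eqP => E; move: H; rewrite E subrr => -[] h.
  by move: z0; rewrite -h eqxx.
by move: z0; rewrite -oppr0 h opprK eqxx.
Qed.

Lemma nz2 p (u : 'I_p.+2) : odd p.+2 -> u != 0 -> u *+ 2 != 0.
Proof. by move=> oL u0; apply/eqP => /two_cancel => /(_ oL) /eqP; apply/negP. Qed.

Lemma nz4 p (u : 'I_p.+2) : odd p.+2 -> u != 0 -> u *+ 4 != 0.
Proof.
move=> oL u0; have -> : u *+ 4 = (u *+ 2) *+ 2 by ring.
by do 2 apply: nz2 => //.
Qed.

Lemma solveA p (x y z : 'I_p.+2) : z = 0 -> x = y + z -> x = y.
Proof. by move=> ->; rewrite addr0. Qed.
Lemma solveB p (x y z : 'I_p.+2) : z = 0 -> x = y - z -> x = y.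
Proof. by move=> ->; rewrite subr0. Qed.
Ltac solve3 h := first [ ring | apply: (solveA h); ring | apply: (solveB h); ring ].

Lemma lowerA p (I : {set 'I_p.+2}) : odd p.+2 -> #|I| = 3%N ->
  (4 <= #|dstar I|)%N \/ exists u, Tp u /\ dstar I = [set u; - u].
Proof.
move=> oL cI.
have : (2 < #|I|)%N by rewrite cI.
case/card_gt2P => [a [b [c [[aI bI cI'] [ab bc ca]]]]].
have Iabc : forall y, y \in I -> [|| y == a, y == b | y == c].
  move=> y yI; apply/negPn/negP => H.
  have : (3 < #|I|)%N.
    apply: leq_trans (_ : (size [:: y; a; b; c] <= _)%N); first by [].
    apply: card_seq; last by rewrite /= yI aI bI cI'.
    move: H; rewrite /= !inE !negb_or => /and3P[h1 h2 h3].
    by rewrite h1 h2 h3 ab bc eq_sym ca.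
  move=> h; have : (3 < #|I|)%N := h.
  by rewrite cI.
have [u hb] : exists u, b = a + u by exists (b - a); ring.
have [v hc] : exists v, c = a + v by exists (c - a); ring.
subst b c.
have u0 : u != 0 by apply: contraNneq ab => ->; rewrite addr0.
have v0 : v != 0 by apply: contraNneq ca => ->; rewrite addr0.
have uv : u != v by apply: contraNneq bc => ->.
have hu : u \in dstar I.
  have -> : u = (a + u) - a by ring. by apply: mem_dstar; rewrite // eq_sym.
have hnu : - u \in dstar I.
  have -> : - u = a - (a + u) by ring. by apply: mem_dstar.
have hv : v \in dstar I.
  have -> : v = (a + v) - a by ring. by apply: mem_dstar.
have hnv : - v \in dstar I.
  have -> : - v = a - (a + v) by ring. by apply: mem_dstar; rewrite // eq_sym.
have hw : v - u \in dstar I.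
  have -> : v - u = (a + v) - (a + u) by ring. by apply: mem_dstar; rewrite // eq_sym.
have hnw : u - v \in dstar I.
  have -> : u - v = (a + u) - (a + v) by ring. by apply: mem_dstar.
have u2 := nz2 oL u0.
have u4 := nz4 oL u0.
case: (eqVneq v (- u)) => [hvu | hvu].
  subst v; case: (eqVneq (u *+ 3) 0) => [h3 | h3].
    right; exists u; split; first by rewrite /Tp u0 h3 eqxx.
    apply/eqP; rewrite eqEsubset; apply/andP; split; last first.
      by apply/subsetP => x /set2P [] ->.
    apply/subsetP => x /dstarP [x0 [a' [b' [a'I b'I E]]]]; subst x.
    move: (Iabc _ a'I) (Iabc _ b'I) => /or3P[] /eqP ? /or3P[] /eqP ?; subst a' b';
      rewrite !inE;
      first [ by move: x0; rewrite subrr eqxx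
            | by apply/orP; left; apply/eqP; solve3 h3
            | by apply/orP; right; apply/eqP; solve3 h3 ].
  left; apply: (card_seq (s := [:: u; - u; - u - u; u - - u])); last first.
    by rewrite /= hu hnu hw hnw.
  have e1 : (u == - u) = false by apply: (neq_of (z := u *+ 2)) => //; left; ring.
  have e2 : (u == - u - u) = false by apply: (neq_of (z := u *+ 3)) => //; left; ring.
  have e3 : (u == u - - u) = false by apply: (neq_of (z := u)) => //; right; ring.
  have e4 : (- u == - u - u) = false by apply: (neq_of (z := u)) => //; left; ring.
  have e5 : (- u == u - - u) = false by apply: (neq_of (z := u *+ 3)) => //; right; ring.
  have e6 : (- u - u == u - - u) = false by apply: (neq_of (z := u *+ 4)) => //; right; ring.
  by rewrite /= !inE e1 e2 e3 e4 e5 e6.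
left; apply: (card_seq (s := [:: u; - u; v; - v])); last first.
  by rewrite /= hu hnu hv hnv.
have v2 := nz2 oL v0.
have uvz : u - v != 0 by rewrite subr_eq0.
have upv : u + v != 0.
  by apply: contraNneq hvu => h; rewrite -(addKr u v) h addr0.
have e1 : (u == - u) = false by apply: (neq_of (z := u *+ 2)) => //; left; ring.
have e2 : (u == v) = false by apply: (neq_of (z := u - v)) => //; left; ring.
have e3 : (u == - v) = false by apply: (neq_of (z := u + v)) => //; left; ring.
have e4 : (- u == v) = false by apply: (neq_of (z := u + v)) => //; right; ring.
have e5 : (- u == - v) = false by apply: (neq_of (z := u - v)) => //; right; ring.
have e6 : (v == - v) = false by apply: (neq_of (z := v *+ 2)) => //; left; ring.
by rewrite /= !inE e1 e2 e3 e4 e5 e6.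
Qed.

Lemma card_sub_seq (T : finType) (A : {set T}) (s : seq T) :
  {subset A <= s} -> (#|A| <= size s)%N.
Proof.
move=> sA; apply: leq_trans (card_size s); apply: subset_leq_card.
by apply/subsetP.
Qed.

Ltac orpickr := first [ apply/eqP; ring | apply/orP; first [ left; apply/eqP; ring | right; orpickr ] ].
Ltac orpick3 h := first [ apply/eqP; solve3 h | apply/orP; first [ left; apply/eqP; solve3 h | right; orpick3 h ] ].

Lemma equi_mem p (I : {set 'I_p.+2}) : equidiff_word 3 I ->
  exists g, forall x, x \in I -> [|| x == 0, x == g | x == g *+ 2].
Proof.
case/existsP => g /eqP ->; exists g => x; rewrite inE => /existsP [[[|[|[|i]]] Hi]] //= /eqP E.
- by apply/orP; left; apply/eqP; apply: val_inj; rewrite /= E.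
- by apply/orP; right; apply/orP; left; apply/eqP; apply: val_inj; rewrite /= E mul1n modn_small.
- apply/orP; right; apply/orP; right; apply/eqP; apply: val_inj; by rewrite /= E Zp_mulrn /= mulnC muln1 modnDmr muln2 addnn.
Qed.

Lemma upperB p (I : {set 'I_p.+2}) : odd p.+2 -> equidiff_word 3 I ->
  (#|dstar I| <= 4)%N /\ (forall t, Tp t -> t \in dset I -> (#|dstar I| <= 2)%N).
Proof.
move=> oL /equi_mem [g Hg]; split.
  apply: (card_sub_seq (s := [:: g; - g; g *+ 2; - (g *+ 2)])).
  move=> x /dstarP [x0 [a' [b' [a'I b'I E]]]]; subst x.
  move: (Hg _ a'I) (Hg _ b'I) => /or3P[] /eqP ? /or3P[] /eqP ?; subst a' b';
    rewrite !inE;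
    first [ by move: x0; rewrite subrr eqxx | orpickr ].
move=> t /andP[t0 /eqP t3] /dsetP [a' [b' [a'I b'I E]]]; subst t.
have h3 : g *+ 3 = 0.
  move: (Hg _ a'I) (Hg _ b'I) t0 t3 => /or3P[] /eqP ? /or3P[] /eqP ? t0 h; subst a' b';
  first [ by move: t0; rewrite subrr eqxx
        | by rewrite -h; ring | by rewrite -oppr0 -h; ring
        | by apply: (two_cancel oL); rewrite -h; ring
        | by apply: (two_cancel oL); rewrite -oppr0 -h; ring ].
apply: (card_sub_seq (s := [:: g; g *+ 2])).
move=> x /dstarP [x0 [a2 [b2 [a2I b2I E]]]]; subst x.
move: (Hg _ a2I) (Hg _ b2I) => /or3P[] /eqP ? /or3P[] /eqP ?; subst a2 b2;
  rewrite !inE;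
  first [ by move: x0; rewrite subrr eqxx | orpick3 h3 ].
Qed.

Lemma sum_disj (T U : finType) (C : {set U}) (f : U -> {set T}) :
  {in C &, forall I J, I != J -> [disjoint f I & f J]} ->
  (\sum_(I in C) #|f I| = #|\bigcup_(I in C) f I|)%N.
Proof.
elim: {C}_.+1 {-2}C (ltnSn #|C|) => // n IH C cC H.
case: (set_0Vmem C) => [-> | [x xC]]; first by rewrite !big_set0 cards0.
rewrite (big_setD1 x xC) (big_setD1 x xC) /=.
rewrite IH; last first.
- by move=> I J /setD1P[_ IC] /setD1P[_ JC]; apply: H.
- by move: cC; rewrite (cardsD1 x C) xC.
apply/esym/eqP; rewrite (leq_card_setU _ _).2.
apply/bigcup_disjointP => I /setD1P[Ix IC]; apply: H => //.
by rewrite eq_sym.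
Qed.

Lemma U_small p (C : {set {set 'I_p.+2}}) :
  (#|\bigcup_(I in C) dstar I| <= p.+1)%N.
Proof.
apply: (@leq_trans #|[set~ (0 : 'I_p.+2)]|); last by rewrite cardsC1 card_ord.
apply: subset_leq_card; apply/subsetP => x /bigcupP [I _].
by rewrite dstarE !inE => /andP[].
Qed.

Lemma CAC_disj p (C : {set {set 'I_p.+2}}) : is_CAC 3 C ->
  {in C &, forall I J, I != J -> [disjoint dstar I & dstar J]}.
Proof.
case/andP => _ /forall_inP dj I J IC JC ne.
by move/forall_inP: (dj I IC) => /(_ J JC); rewrite ne.
Qed.

Lemma CAC_card p (C : {set {set 'I_p.+2}}) : is_CAC 3 C ->
  forall I, I \in C -> #|I| = 3%N.
Proof. by case/andP => /forall_inP c3 _ I IC; apply/eqP; apply: c3. Qed.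

Lemma upperCAC p (C : {set {set 'I_p.+2}}) : odd p.+2 -> is_CAC 3 C ->
  (4 * #|C| <= p.+3)%N /\ (~~ (3 %| p.+2)%N -> (4 * #|C| <= p.+1)%N).
Proof.
move=> oL cac; have dj := CAC_disj cac; have c3 := CAC_card cac.
have := U_small C; rewrite -(sum_disj dj) => Hs.
case: (boolP [exists I in C, #|dstar I| < 4]%N) => [/exists_inP [I0 I0C small]|].
  case: (lowerA oL (c3 _ I0C)) => [|[u [Tu dI0]]]; first by rewrite leqNgt small.
  have big : forall J, J \in C :\ I0 -> (4 <= #|dstar J|)%N.
    move=> J /setD1P [JI0 JC]; case: (lowerA oL (c3 _ JC)) => // [[u' [Tu' dJ]]].
    have : u' \in dstar I0 by rewrite dI0 !inE; case: (T_pair Tu Tu') => ->; rewrite eqxx ?orbT.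
    have uJ : u' \in dstar J by rewrite dJ !inE eqxx.
    by rewrite (disjointFr (dj _ _ JC I0C JI0) uJ).
  have c2 : #|dstar I0| = 2%N.
    rewrite dI0 cards2; case/andP: Tu => u0 _.
    by rewrite (neq_of (z := u *+ 2)) //; [apply: nz2 | left; ring].
  move: Hs; rewrite (big_setD1 I0 I0C) /= c2 (cardsD1 I0 C) I0C mulnDr => Hs.
  have : (\sum_(J in C :\ I0) 4 <= \sum_(J in C :\ I0) #|dstar J|)%N.
    by apply: leq_sum => J /big.
  rewrite sum_nat_const /= => h; split; first lia.
  by move: Tu; rewrite T_char => /andP[-> _].
rewrite negb_exists_in => /forall_inP big.
have : (\sum_(J in C) 4 <= \sum_(J in C) #|dstar J|)%N.
  by apply: leq_sum => J /big; rewrite -leqNgt.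
rewrite sum_nat_const => h; split => [|_]; lia.
Qed.

Lemma lowerC p (C : {set {set 'I_p.+2}}) : odd p.+2 -> is_CAC 3 C ->
  equidiff_code 3 C ->
  (#|\bigcup_(I in C) dstar I| <= 4 * #|C|)%N /\
  (forall t, Tp t -> t \in \bigcup_(I in C) dset I ->
     (#|\bigcup_(I in C) dstar I| + 2 <= 4 * #|C|)%N).
Proof.
move=> oL cac /forall_inP eq; have dj := CAC_disj cac.
rewrite -(sum_disj dj); split.
  have : (\sum_(J in C) #|dstar J| <= \sum_(J in C) 4)%N.
    by apply: leq_sum => J /eq /(upperB oL) [].
  by rewrite sum_nat_const mulnC.
move=> t Tt /bigcupP [I0 I0C tI0].
have h0 : (#|dstar I0| <= 2)%N by case: (upperB oL (eq _ I0C)) => _ /(_ t Tt tI0).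
have : (\sum_(J in C :\ I0) #|dstar J| <= \sum_(J in C :\ I0) 4)%N.
  by apply: leq_sum => J /setD1P [_ /eq /(upperB oL) []].
move=> h.
have hC : (\sum_(J in C) 4 = 4 * #|C|)%N by rewrite sum_nat_const mulnC.
rewrite -hC (big_setD1 I0 I0C) (big_setD1 I0 I0C) /=.
apply: leq_trans (leq_add (leq_add h0 h) (leqnn 2)) _.
by rewrite addnAC; exact: leq_add (leqnn 4) (leqnn _).
Qed.

Lemma leave_bound p (C : {set {set 'I_p.+2}}) :
  (p.+2 <= #|leave C| + 1 + #|\bigcup_(I in C) dstar I|)%N.
Proof.
rewrite /leave.
have e := cardsC (\bigcup_(I in C) dset I); rewrite card_ord in e.
have : (#|\bigcup_(I in C) dset I| <= #|(0%R : 'I_p.+2) |: \bigcup_(I in C) dstar I|)%N.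
  apply: subset_leq_card; apply/subsetP => x /bigcupP [I IC xI].
  rewrite !inE; case: eqP => //= /eqP x0; apply/bigcupP; exists I => //.
  by rewrite dstarE x0.
rewrite cardsU1 => h.
case: ((0%R : 'I_p.+2) \in _) h => /= h; set a := #|\bigcup_(I in C) dset I| in e h *; set b := #|\bigcup_(I in C) dstar I| in h *; set c := #|~: _| in e *; clearbody a b c; lia.
Qed.

Local Close Scope ring_scope.

Theorem mainTheorem11 (L : nat) (C : {set {set 'I_L}}) :
  3 <= L -> odd L ->
  is_CAC 3 C -> equidiff_code 3 C ->
  #|leave C| < 4 ->
  ~ (3 %| L /\
     [set x : 'I_L | (nat_of_ord x == L %/ 3) || (nat_of_ord x == 2 * (L %/ 3))]
       \subset leave C) ->
  optimal 3 C /\ #|C| = Me L 3 /\ #|C| = M L 3.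
Proof.
case: L C => [|[|[|n]]] C // L3 oL cac eqc hlv hS.
have key : forall C' : {set {set 'I_n.+3}}, is_CAC 3 C' -> #|C'| <= #|C|.
  move=> C' cac'; have [u1 u2] := upperCAC oL cac'.
  have [l1 l2] := lowerC oL cac eqc; have lb := leave_bound C.
  case: (boolP (3 %| n.+3)) => h3.
    have : ~~ ([set x : 'I_n.+3 | (nat_of_ord x == n.+3 %/ 3) || (nat_of_ord x == 2 * (n.+3 %/ 3))]
       \subset leave C) by apply/negP => sub; apply: hS.
    case/subsetPn => t tS tnl.
    have Tt : Tp t by rewrite T_char h3; move: tS; rewrite inE.
    have tU : t \in \bigcup_(I in C) dset I by move: tnl; rewrite /leave in_setC negbK.
    have := l2 t Tt tU; lia.
  have := u2 h3; lia.
have hM : #|C| = M n.+3 3.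
  apply/eqP; rewrite eqn_leq; apply/andP; split.
    by rewrite /M; apply: leq_bigmax_cond.
  by apply/bigmax_leqP => C' /key.
have hMe : #|C| = Me n.+3 3.
  apply/eqP; rewrite eqn_leq; apply/andP; split.
    by rewrite /Me; apply: leq_bigmax_cond; rewrite cac eqc.
  by apply/bigmax_leqP => C' /andP[/key].
by [].
Qed.
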